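(* Let $X$ be a linearly ordered set. The free $\mathrm{GD}^!$-algebra $\mathrm{GD}^!\langle X\rangle$ is linearly spanned by elements of the form $x_1*\dots*x_t*w$ with $t\ge 0$, $x_i\in X$, $x_1\le\dots\le x_t$, where $w$ is a monomial in $X$ built using the operation $\star$ only.
   Context: A $\mathrm{GD}^!$-algebra is a vector space with two bilinear operations $*$ and $\star$ such that $*$ is associative and commutative, and $(x\star y)\star z-x\star(y\star z)=(x\star z)\star y-x\star(z\star y)$, $x\star(y\star z)=y\star(x\star z)$, $x\star(y*z)=(x\star y)*z$, $x\star(y*z)+y\star(x*z)=(x*y)\star z$. *)

(* Defs.v *)
From HB Require Import structures.
From mathcomp Require Import all_boot all_order all_algebra.
Set Implicit Arguments. Unset Strict Implicit. Unset Printing Implicit Defensive.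
Import Order.TTheory GRing.Theory.
Local Open Scope ring_scope.

(* GD^!-algebra structure on a K-vector space V: two bilinear operations
   cm ( * , associative & commutative) and st ( \star ) with the four identities. *)
Definition bilinear_op (K : fieldType) (V : lmodType K) (op : V -> V -> V) :=
  (forall (a : K) x y z, op (a *: x + y) z = a *: op x z + op y z) /\
  (forall (a : K) x y z, op x (a *: y + z) = a *: op x y + op x z).

Definition is_GDshriek (K : fieldType) (V : lmodType K) (cm st : V -> V -> V) :=
  bilinear_op cm /\ bilinear_op st /\
      (forall x y z, cm (cm x y) z = cm x (cm y z)) /\
      (forall x y, cm x y = cm y x) /\
      (forall x y z, st (st x y) z - st x (st y z) = st (st x z) y - st x (st z y)) /\
      (forall x y z, st x (st y z) = st y (st x z)) /\
      (forall x y z, st x (cm y z) = cm (st x y) z) /\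
      (forall x y z, st x (cm y z) + st y (cm x z) = st (cm x y) z).

(* Terms of the free algebra: the free GD^!<X> is terms modulo gd_equiv. *)
Inductive term (K : Type) (X : Type) :=
| TVar of X
| TZero
| TAdd of term K X & term K X
| TScale of K & term K X
| TCm of term K X & term K X
| TSt of term K X & term K X.

Fixpoint eval_term (K : fieldType) (X : Type) (V : lmodType K)
  (cm st : V -> V -> V) (v : X -> V) (t : term K X) : V :=
  match t with
  | TVar x => v x
  | TZero => 0
  | TAdd a b => eval_term cm st v a + eval_term cm st v b
  | TScale c a => c *: eval_term cm st v a
  | TCm a b => cm (eval_term cm st v a) (eval_term cm st v b)
  | TSt a b => st (eval_term cm st v a) (eval_term cm st v b)
  end.

(* Equality in the free GD^!-algebra on X: equal under every valuation in
   every GD^!-algebra over K. *)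
Definition gd_equiv (K : fieldType) (X : Type) (t1 t2 : term K X) : Prop :=
  forall (V : lmodType K) (cm st : V -> V -> V), is_GDshriek cm st ->
  forall v : X -> V, eval_term cm st v t1 = eval_term cm st v t2.

Inductive smon (X : Type) :=
| SVar of X
| SSt of smon X & smon X.

Fixpoint smon_term (K X : Type) (w : smon X) : term K X :=
  match w with
  | SVar x => TVar K x
  | SSt a b => TSt (smon_term K a) (smon_term K b)
  end.

Definition nf_term (K X : Type) (xs : seq X) (w : smon X) : term K X :=
  foldr (fun x t => TCm (TVar K x) t) (smon_term K w) xs.

Definition lincomb_term (K X : Type) (c : seq (K * (seq X * smon X))) : term K X :=
  foldr (fun p t => TAdd (TScale p.1 (nf_term K p.2.1 p.2.2)) t) (TZero K X) c.

(* Main.v *)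
Require Import Defs.
From HB Require Import structures.
From mathcomp Require Import all_boot all_order all_algebra.

Set Implicit Arguments. Unset Strict Implicit. Unset Printing Implicit Defensive.
Import Order.TTheory GRing.Theory.
Local Open Scope ring_scope.

Section Syn.
Variables (K : fieldType) (X : Type).
Notation L := (seq (K * (seq X * smon X))).

Definition scaleL (k : K) (c : L) : L := map (fun p => (k * p.1, p.2)) c.
Definition prependL (xs : seq X) (c : L) : L :=
  map (fun p => (p.1, (xs ++ p.2.1, p.2.2))) c.
Definition stL (a : smon X) (c : L) : L :=
  map (fun p => (p.1, (p.2.1, SSt a p.2.2))) c.
Fixpoint smul (w w' : smon X) : L :=
  match w with
  | SVar x => [:: (1, ([:: x], w'))]
  | SSt a b => stL a (smul b w')
  end.
Fixpoint sl (xs : seq X) (w u : smon X) : L :=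
  match xs with
  | [::] => [:: (1, ([::], SSt w u))]
  | x :: xs' => stL (SVar x) (prependL xs' (smul w u)) ++ prependL [:: x] (sl xs' w u)
  end.
Definition mulP (p q : seq X * smon X) : L := prependL (p.1 ++ q.1) (smul p.2 q.2).
Definition stP (p q : seq X * smon X) : L := prependL q.1 (sl p.1 p.2 q.2).
Definition opL (f : seq X * smon X -> seq X * smon X -> L) (c1 c2 : L) : L :=
  flatten (map (fun p => flatten (map (fun q => scaleL (p.1 * q.1) (f p.2 q.2)) c2)) c1).
End Syn.
Arguments smul {K X}.
Arguments sl {K X}.
Arguments mulP {K X}.
Arguments stP {K X}.

Section Sem.
Variables (K : fieldType) (X : Type) (V : lmodType K) (cm st : V -> V -> V) (v : X -> V).
Variable H : is_GDshriek cm st.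
Notation L := (seq (K * (seq X * smon X))).

Definition evs (w : smon X) : V := eval_term cm st v (smon_term K w).
Definition Ef (xs : seq X) (W : V) : V := foldr (fun x r => cm (v x) r) W xs.
Definition EN (p : seq X * smon X) : V := Ef p.1 (evs p.2).
Definition evalL (c : L) : V := foldr (fun p r => p.1 *: EN p.2 + r) 0 c.

Lemma bil_props (op : V -> V -> V) : bilinear_op op ->
  (forall z, op 0 z = 0) /\ (forall z, op z 0 = 0) /\
  (forall a x z, op (a *: x) z = a *: op x z) /\ (forall x y z, op (x + y) z = op x z + op y z) /\
  (forall a x z, op z (a *: x) = a *: op z x) /\ (forall x y z, op z (x + y) = op z x + op z y).
Proof.
move=> [H1 H2].
have h0 : forall z, op 0 z = 0.
  move=> z; have := H1 1 0 0 z; rewrite scaler0 addr0 scale1r => h.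
  by apply: (@addrI _ (op 0 z)); rewrite addr0 -h.
have h0' : forall z, op z 0 = 0.
  move=> z; have := H2 1 z 0 0; rewrite scaler0 addr0 scale1r => h.
  by apply: (@addrI _ (op z 0)); rewrite addr0 -h.
split; first exact h0. split; first exact h0'.
split; first by move=> a x z; have := H1 a x 0 z; rewrite !addr0 h0 addr0.
split; first by move=> x y z; have := H1 1 x y z; rewrite !scale1r.
split; first by move=> a x z; have := H2 a z x 0; rewrite !addr0 h0' addr0.
by move=> x y z; have := H2 1 z x y; rewrite !scale1r.
Qed.

Lemma evalL_cat c1 c2 : evalL (c1 ++ c2) = evalL c1 + evalL c2.
Proof. by elim: c1 => [|p c IH] /=; rewrite ?add0r // IH addrA. Qed.

Lemma evalL_scale k c : evalL (scaleL k c) = k *: evalL c.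
Proof. by elim: c => [|p c IH] /=; rewrite ?scaler0 // IH scalerDr scalerA. Qed.

Lemma opL_eval (f : seq X * smon X -> seq X * smon X -> L) (op : V -> V -> V) :
  bilinear_op op -> (forall p q, evalL (f p q) = op (EN p) (EN q)) ->
  forall c1 c2, evalL (opL f c1 c2) = op (evalL c1) (evalL c2).
Proof.
move=> /bil_props [h0 [h0' [hsl [hdl [hsr hdr]]]]] Hf c1 c2.
elim: c1 => [|p c1 IH] /=; first by rewrite h0.
rewrite evalL_cat IH hdl hsl; congr (_ + _).
elim: c2 {IH} => [|q c2 IH2] /=; first by rewrite h0' scaler0.
by rewrite evalL_cat IH2 evalL_scale Hf hdr hsr scalerDr scalerA.
Qed.

Let Hcm := H.1.
Let Hst := H.2.1.
Let cmA := H.2.2.1.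
Let cmC := H.2.2.2.1.
Let st3 := H.2.2.2.2.2.2.1.
Let st4 := H.2.2.2.2.2.2.2.

Lemma Ef_cat xs ys W : Ef (xs ++ ys) W = Ef xs (Ef ys W).
Proof. by rewrite /Ef foldr_cat. Qed.

Lemma Ef_cml xs W Z : cm (Ef xs W) Z = Ef xs (cm W Z).
Proof. by elim: xs => [|x xs IH] //=; rewrite cmA IH. Qed.

Lemma Ef_cmr xs W Z : cm Z (Ef xs W) = Ef xs (cm Z W).
Proof. by rewrite cmC Ef_cml cmC. Qed.

Lemma Ef_st xs A W : st A (Ef xs W) = Ef xs (st A W).
Proof. by elim: xs => [|x xs IH] //=; rewrite [cm (v x) _]cmC st3 IH cmC. Qed.

Lemma Ef_lin xs a W1 W2 : Ef xs (a *: W1 + W2) = a *: Ef xs W1 + Ef xs W2.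
Proof.
have [_ [h0' [_ [_ [hsr hdr]]]]] := bil_props Hcm.
by elim: xs => [|x xs IH] //=; rewrite IH hdr hsr.
Qed.

Lemma Ef0 xs : Ef xs 0 = 0.
Proof.
have [_ [h0' _]] := bil_props Hcm.
by elim: xs => [|x xs IH] //=; rewrite IH h0'.
Qed.

Lemma evalL_prepend xs c : evalL (prependL xs c) = Ef xs (evalL c).
Proof.
elim: c => [|p c IH] /=; first by rewrite Ef0.
by rewrite IH Ef_lin /EN Ef_cat.
Qed.

Lemma evalL_stL a c : evalL (stL a c) = st (evs a) (evalL c).
Proof.
have [_ [h0' [_ [_ [hsr hdr]]]]] := bil_props Hst.
elim: c => [|p c IH] /=; first by rewrite h0'.
by rewrite IH hdr hsr /EN Ef_st.
Qed.

Lemma smulE w u : evalL (smul w u) = cm (evs w) (evs u).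
Proof.
elim: w => [x|a _ b IH] /=; first by rewrite /EN /= scale1r addr0.
by rewrite evalL_stL IH st3.
Qed.

Lemma slE xs w u : evalL (sl xs w u) = st (Ef xs (evs w)) (evs u).
Proof.
elim: xs => [|x xs IH] /=; first by rewrite /EN /= scale1r addr0.
rewrite evalL_cat evalL_stL !evalL_prepend smulE IH -st4 -Ef_cml.
congr (_ + _); rewrite /= [cm (v x) (evs u)]cmC st3 cmC //.
Qed.

Lemma mulPE p q : evalL (mulP p q) = cm (EN p) (EN q).
Proof.
by rewrite /mulP evalL_prepend smulE /EN Ef_cat Ef_cml Ef_cmr.
Qed.

Lemma stPE p q : evalL (stP p q) = st (EN p) (EN q).
Proof. by rewrite /stP evalL_prepend slE /EN Ef_st. Qed.

Lemma lincombE c : eval_term cm st v (lincomb_term c) = evalL c.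
Proof.
elim: c => [|p c IH] //=; rewrite IH; congr (_ *: _ + _).
rewrite /nf_term /EN /Ef; elim: p.2.1 => [|x xs IHx] //=; by rewrite IHx.
Qed.

Lemma Ef_move l1 x l2 W : Ef (l1 ++ x :: l2) W = Ef (x :: l1 ++ l2) W.
Proof.
elim: l1 => [|a l1 IH] //=; rewrite IH /= -!cmA [cm (v a) (v x)]cmC //.
Qed.

End Sem.

Lemma Ef_perm (K : fieldType) (X : eqType) (V : lmodType K) (cm st : V -> V -> V) (v : X -> V) :
  is_GDshriek cm st -> forall xs ys W, perm_eq xs ys -> Ef cm v xs W = Ef cm v ys W.
Proof.
move=> H; elim=> [|x xs IH] ys W.
  by move=> /perm_size /= /esym /size0nil ->.
move=> hp; have hx : x \in ys by rewrite -(perm_mem hp) mem_head.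
move: hp; case/splitPr: hx => ys1 ys2 hp.
rewrite (@Ef_move _ _ _ cm st v H) /= (IH (ys1 ++ ys2)) //.
rewrite -(perm_cons x); apply: (perm_trans hp).
by rewrite -cat1s perm_catCA.
Qed.

Theorem mainTheorem5 (K : fieldType) (d : Order.disp_t) (X : orderType d)
  (u : term K X) :
  exists c : seq (K * (seq X * smon X)),
    all (fun p => sorted (fun x y : X => (x <= y)%O) p.2.1) c /\
    gd_equiv u (lincomb_term c).
Proof.
have [c Hc] : exists c : seq (K * (seq X * smon X)), forall (V : lmodType K) (cm st : V -> V -> V),
    is_GDshriek cm st -> forall v, eval_term cm st v u = evalL cm st v c.
  elim: u => [x||a IHa b IHb|k a IHa|a IHa b IHb|a IHa b IHb].
  - exists [:: (1, ([::], SVar x))] => V cm st H v /=.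
    by rewrite /EN /= scale1r addr0.
  - by exists [::].
  - case: IHa => ca Ha; case: IHb => cb Hb; exists (ca ++ cb) => V cm st H v /=.
    by rewrite evalL_cat Ha // Hb.
  - case: IHa => ca Ha; exists (scaleL k ca) => V cm st H v /=.
    by rewrite evalL_scale Ha.
  - case: IHa => ca Ha; case: IHb => cb Hb; exists (opL mulP ca cb) => V cm st H v /=.
    rewrite (opL_eval (op := cm)) ?Ha ?Hb //; first exact: H.1.
    by move=> p q; apply: mulPE.
  - case: IHa => ca Ha; case: IHb => cb Hb; exists (opL stP ca cb) => V cm st H v /=.
    rewrite (opL_eval (op := st)) ?Ha ?Hb //; first exact: H.2.1.
    by move=> p q; apply: stPE.
exists (map (fun p => (p.1, (sort (fun x y : X => (x <= y)%O) p.2.1, p.2.2))) c).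
split.
  elim: c {Hc} => [|p c IH] //=; rewrite IH andbT; apply: sort_sorted => x y; exact: le_total.
move=> V cm st H v; rewrite lincombE Hc //.
elim: c {Hc} => [|p c IH] //=; rewrite IH; congr (_ *: _ + _).
rewrite /EN /=; apply: (@Ef_perm _ _ _ cm st v H); by rewrite perm_sym perm_sort.
Qed.
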